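(* Let $0<r<s<\infty$, $\theta\in[0,\frac18)$, and let $f\colon[r,s]\to\mathbb R$ be non-decreasing and right-continuous. Then for every measurable $E\subset[r,s]$ with $\mathscr{L}^{1}(E)<\theta(s-r)$ there exist $r<\tilde r<\tilde s<s$ with $\tilde r,\tilde s\notin E$ such that, for $a\in\{\tilde r,\tilde s\}$, \[ \frac{f(a)-f(\tau)}{a-\tau}\leq\frac{800}{1-8\theta}\frac{f(s)-f(r)}{s-r}\ \text{ for all }\tau\in[r,a),\qquad \frac{f(\tau)-f(a)}{\tau-a}\leq\frac{800}{1-8\theta}\frac{f(s)-f(r)}{s-r}\ \text{ for all }\tau\in(a,s], \] and $(\tilde s-\tilde r)\leq(s-r)\leq8(\tilde s-\tilde r)$. *)

(* Defs.v *)
From HB Require Import structures.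
From mathcomp Require Import all_boot all_order all_algebra.
From mathcomp Require Import all_classical all_reals all_analysis.

(* Lebesgue-measurable subsets of R (the completed, i.e. Caratheodory,
   sigma-algebra of the Lebesgue measure) and the (completed) Lebesgue
   measure L^1 on them. *)
Definition Lmeasurable {R : realType} (E : set R) : Prop :=
  measurable (E : set (caratheodory_type (R:=R) (wlength (@idfun R))^*%mu)).

Definition Lmeasure {R : realType} (E : set R) : \bar R :=
  @completed_lebesgue_measure R E.

(* Main.v *)
Require Import Defs.
From HB Require Import structures.
From mathcomp Require Import all_boot all_order all_algebra.
From mathcomp Require Import all_classical all_reals all_analysis.
From mathcomp Require Import ring lra measurable_realfun.
Import Order.TTheory GRing.Theory Num.Theory.
Import numFieldNormedType.Exports.
Local Open Scope classical_set_scope.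
Local Open Scope ring_scope.

Section Aux.
Context {R : realType}.

Lemma ball_memE (x rho y : R) : ball x rho y <-> x - rho < y /\ y < x + rho.
Proof.
rewrite ball_itv /= in_itv /=; split; [by move/andP|by case=> -> ->].
Qed.

Lemma exists_max (T : eqType) (g : T -> R) (D : seq T) : D != [::] ->
  exists2 j, j \in D & forall k, k \in D -> g k <= g j.
Proof.
elim: D => // a D IH _.
have [->|DN] := eqVneq D [::].
  by exists a; rewrite ?mem_head // => k; rewrite inE => /eqP ->.
have [j jD jmax] := IH DN.
have [ja|aj] := leP (g j) (g a).
  exists a; first exact: mem_head.
  move=> k; rewrite inE => /orP[/eqP ->//|/jmax]; move=> h; exact: le_trans h ja.
exists j; first by rewrite inE jD orbT.
by move=> k; rewrite inE => /orP[/eqP ->|/jmax//]; exact: ltW.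
Qed.

Variables (f : R -> R) (r s : R).
Hypothesis f_nd : forall x y, r <= x -> x <= y -> y <= s -> f x <= f y.

Lemma sum_incr n : forall (D : seq (R * R)) t, size D = n -> uniq D ->
  r <= t -> t <= s ->
  (forall j, j \in D -> 0 < j.2 /\ r <= j.1 - j.2 /\ j.1 + j.2 <= t) ->
  (forall i j, i \in D -> j \in D -> (ball i.1 i.2 `&` ball j.1 j.2 !=set0) -> i = j) ->
  \sum_(j <- D) (f (j.1 + j.2) - f (j.1 - j.2)) <= f t - f r.
Proof.
elim: n => [|n IH] D t.
  move/size0nil => -> _ rt ts _ _; rewrite big_nil subr_ge0; exact: f_nd.
move=> sD uD rt ts Dj Ddis.
have DN : D != [::] by apply/eqP => D0; rewrite D0 in sD.
have [j0 j0D j0max] := @exists_max _ (fun j : R * R => j.1 - j.2) _ DN.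
rewrite (big_rem j0 j0D) /=.
have [p0 [rc0 d0t]] := Dj _ j0D.
have IHr := IH (rem j0 D) (j0.1 - j0.2).
have : \sum_(j <- rem j0 D) (f (j.1 + j.2) - f (j.1 - j.2)) <= f (j0.1 - j0.2) - f r.
  apply: IHr => //.
  - by rewrite size_rem // sD.
  - exact: rem_uniq.
  - lra.
  - move=> j; rewrite (mem_rem_uniq _ uD) => /andP[jj0 jD].
    have [pj [rcj djt]] := Dj _ jD.
    split=> //; split=> //.
    have cj := j0max _ jD.
    rewrite leNgt; apply/negP => dj.
    have := Ddis _ _ jD j0D; move: jj0 => /eqP jj0 H; apply: jj0; apply: H.
    have [dd|dd] := leP (j.1 + j.2) (j0.1 + j0.2).
      exists ((j0.1 - j0.2 + (j.1 + j.2)) / 2); split; apply/ball_memE; split; lra.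
    exists ((j0.1 - j0.2 + (j0.1 + j0.2)) / 2); split; apply/ball_memE; split; lra.
  - move=> i j /mem_rem iD /mem_rem jD; exact: Ddis.
move=> H.
have : f (j0.1 + j0.2) <= f t by apply: f_nd; lra.
lra.
Qed.
Local Notation m := ((@wlength R idfun)^*)%mu.

Lemma m_cover (T : eqType) (D : seq T) (G : T -> set R) :
  (m (\bigcup_(i in [set` D]) G i) <= \sum_(j <- D) m (G j))%E.
Proof.
elim: D => [|a D IH].
  have -> : \bigcup_(i in [set` [::]]) G i = set0.
    by rewrite -subset0 => x [i].
  by rewrite big_nil outer_measure0.
rewrite big_cons.
apply: (@le_trans _ _ (m (G a `|` \bigcup_(i in [set` D]) G i))).
  apply: le_outer_measure => x [i /=]; rewrite inE => /orP[/eqP ->|iD] Gx.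
    by left.
  by right; exists i.
apply: (le_trans (outer_measureU2 _ _ _)); exact: leeD.
Qed.

Variable lam : R.
Hypothesis lam0 : 0 < lam.
Hypothesis rs : r <= s.

Definition Hv := [set i : R * R | 0 < i.2 /\ r <= i.1 - i.2 /\ i.1 + i.2 <= s /\
  lam * (i.2 *+ 2) < f (i.1 + i.2) - f (i.1 - i.2)].
Definition Hset := \bigcup_(i in Hv) ball i.1 i.2.
Definition Bf (i : R * R) : set R := ball i.1 (if 0 < i.2 then i.2 else 1).

Lemma compact_bound K : compact K -> K `<=` Hset ->
  (m K <= (3 * (f s - f r) / lam)%:E)%E.
Proof.
rewrite compact_cover => cK KH.
have BfH i : Hv i -> Bf i = ball i.1 i.2 by rewrite /Bf => -[-> _].
have [D' D'H KD'] : finite_subset_cover Hv Bf K.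
  apply: cK; first by move=> i _; exact: ball_open.
  move=> x /KH [i Hi bx]; exists i => //; by rewrite BfH.
have isB i : is_ball (Bf i) by exact: is_ball_ball.
have Bn0 i : Bf i !=set0.
  by exists i.1; apply/ball_memE; case: ifP => h; split; lra.
have [D [uD DD' tD cD]] := vitali_lemma_finite_cover isB Bn0 (finmap.enum_fset D').
have DH j : j \in D -> Hv j by move=> jD; have := D'H j (DD' j jD); rewrite in_setE.
apply: (@le_trans _ _ (m (\bigcup_(i in [set` D]) (scale_ball 3%:R \o Bf) i))).
  apply: le_outer_measure => x /KD' Kx; exact: cD.
apply: (le_trans (@m_cover _ D (scale_ball 3%:R \o Bf))).
have -> : \sum_(j <- D) m ((scale_ball 3%:R \o Bf) j) =
          \sum_(j <- D) (((3 * j.2) *+ 2)%:E)%E.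
  rewrite big_seq [RHS]big_seq; apply: eq_bigr => j /DH Hj /=.
  have h3 : 0 <= 3 * j.2 by case: Hj => *; rewrite mulr_ge0 // ltW.
  rewrite BfH // scale_ballE //; exact: (lebesgue_measure_ball j.1 h3).
rewrite sumEFin lee_fin.
have Hs := @sum_incr (size D) D s erefl uD rs (lexx s).
have : \sum_(j <- D) (f (j.1 + j.2) - f (j.1 - j.2)) <= f s - f r.
  apply: Hs.
    by move=> j /DH [? [? [? ?]]].
  move=> i j iD jD; rewrite -(BfH i (DH _ iD)) -(BfH j (DH _ jD)); exact: tD.
move=> Hsum.
apply: (@le_trans _ _ (\sum_(j <- D) (3 / lam * (f (j.1 + j.2) - f (j.1 - j.2))))).
  rewrite big_seq [X in _ <= X]big_seq; apply: ler_sum => j /DH [p0 [_ [_ hl]]].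
  set X := f (j.1 + j.2) - f (j.1 - j.2) in hl *.
  have h : j.2 *+ 2 <= X / lam by rewrite ler_pdivlMr // mulrC ltW.
  have -> : 3 / lam * X = 3 * (X / lam) by rewrite [X / lam]mulrC mulrA.
  rewrite -mulrnAr; rewrite ler_wpM2l //.
rewrite -mulr_sumr mulrAC.
apply: ler_wpM2r; first by rewrite invr_ge0 ltW.
apply: ler_wpM2l => //.
Qed.

Lemma H_bound : (m Hset <= (3 * (f s - f r) / lam)%:E)%E.
Proof.
change (lebesgue_measure Hset <= (3 * (f s - f r) / lam)%:E)%E.
rewrite lebesgue_regularity_inner_sup; last first.
  apply: open_measurable; apply: bigcup_open => i _; exact: ball_open.
apply: ge_ereal_sup => _ [K [cK KH] <-]; exact: compact_bound.
Qed.

End Aux.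

Section Good.
Context {R : realType}.
Variables (f : R -> R) (r s lam : R).
Hypothesis f_nd : forall x y, r <= x -> x <= y -> y <= s -> f x <= f y.
Hypothesis lam0 : 0 <= lam.

Lemma good_left a : r < a -> a < s -> ~ Hset f r s lam a ->
  forall τ, r <= τ -> τ < a -> (f a - f τ) / (a - τ) <= lam.
Proof.
move=> ra as_ Ha τ rτ τa; have lam0' := lam0.
rewrite ler_pdivrMr; last by lra.
rewrite leNgt; apply/negP => hg.
set g := f a - f τ - lam * (a - τ).
have g0 : 0 < g by rewrite /g; lra.
set δ := Num.min ((s - a) / 2) (g / (2 * lam + 1)).
have l1 : 0 < 2 * lam + 1 by lra.
have δ0 : 0 < δ by rewrite lt_min; apply/andP; split; [lra| apply: divr_gt0].
have δ1 : δ <= (s - a) / 2 by rewrite ge_min lexx.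
have δ2' : δ <= g / (2 * lam + 1) by rewrite ge_min lexx orbT.
have δ2 : δ * (2 * lam + 1) <= g by rewrite -ler_pdivlMr //; lra.
have lg : lam * δ < g by nra.
have fa : f a <= f (a + δ) by apply: f_nd; lra.
apply: Ha; exists ((τ + (a + δ)) / 2, (a + δ - τ) / 2) => /=.
  have e1 : (τ + (a + δ)) / 2 + (a + δ - τ) / 2 = a + δ by field.
  have e2 : (τ + (a + δ)) / 2 - (a + δ - τ) / 2 = τ by field.
  have e3 : (a + δ - τ) / 2 *+ 2 = a + δ - τ by rewrite -mulr_natr; field.
  rewrite /Hv /= e1 e2 e3; split; first lra.
  split; first lra. split; first lra.
  have ee : lam * (a + δ - τ) = lam * (a - τ) + lam * δ by ring.
  rewrite ee; move: lg; rewrite /g; lra.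
apply/ball_memE; split; lra.
Qed.

Lemma good_right a : r < a -> a < s -> ~ Hset f r s lam a ->
  forall τ, a < τ -> τ <= s -> (f τ - f a) / (τ - a) <= lam.
Proof.
move=> ra as_ Ha τ aτ τs; have lam0' := lam0.
rewrite ler_pdivrMr; last by lra.
rewrite leNgt; apply/negP => hg.
set g := f τ - f a - lam * (τ - a).
have g0 : 0 < g by rewrite /g; lra.
set δ := Num.min ((a - r) / 2) (g / (2 * lam + 1)).
have l1 : 0 < 2 * lam + 1 by lra.
have δ0 : 0 < δ by rewrite lt_min; apply/andP; split; [lra| apply: divr_gt0].
have δ1 : δ <= (a - r) / 2 by rewrite ge_min lexx.
have δ2' : δ <= g / (2 * lam + 1) by rewrite ge_min lexx orbT.
have δ2 : δ * (2 * lam + 1) <= g by rewrite -ler_pdivlMr //; lra.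
have lg : lam * δ < g by nra.
have fa : f (a - δ) <= f a by apply: f_nd; lra.
apply: Ha; exists ((a - δ + τ) / 2, (τ - (a - δ)) / 2) => /=.
  have e1 : (a - δ + τ) / 2 + (τ - (a - δ)) / 2 = τ by field.
  have e2 : (a - δ + τ) / 2 - (τ - (a - δ)) / 2 = a - δ by field.
  have e3 : (τ - (a - δ)) / 2 *+ 2 = τ - (a - δ) by rewrite -mulr_natr; field.
  rewrite /Hv /= e1 e2 e3; split; first lra.
  split; first lra. split; first lra.
  have ee : lam * (τ - (a - δ)) = lam * (τ - a) + lam * δ by ring.
  rewrite ee; move: lg; rewrite /g; lra.
apply/ball_memE; split; lra.
Qed.
End Good.

Section Fin.
Context {R : realType}.
Local Notation m := ((@wlength R idfun)^*)%mu.

Lemma efin (x : \bar R) b : (0 <= x)%E -> (x <= b%:E)%E ->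
  exists2 e, x = e%:E & 0 <= e <= b.
Proof.
case: x => [e| |] //= h1 h2; first by exists e => //; rewrite -!lee_fin h1 h2.
Qed.

Lemma find_point (E H : set R) (e h p q : R) : p < q -> m E = e%:E ->
  m H = h%:E -> e + h < q - p ->
  exists a, [/\ p < a, a < q, ~ E a & ~ H a].
Proof.
move=> pq mE mH lt; apply: contrapT => nex.
have sub : [set` `]p, q[] `<=` E `|` H.
  move=> x /=; rewrite in_itv /= => /andP[px xq].
  have [Ex|nEx] := pselect (E x); [by left|right].
  by apply: contrapT => nHx; apply: nex; exists x; split.
have h1 := le_outer_measure m _ _ sub.
have e2 : (q - p)%:E = m [set` `]p, q[] :> \bar R.
  rewrite -[RHS]/(lebesgue_measure _) lebesgue_measure_itv /= lte_fin pq -EFinD //.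
have h2 : ((q - p)%:E <= m (E `|` H))%E by rewrite e2; exact: h1.
have h4 : (m E + m H <= (e + h)%:E)%E by rewrite mE mH.
have := le_trans (le_trans h2 (outer_measureU2 m E H)) h4.
rewrite lee_fin; lra.
Qed.
End Fin.

Theorem lemma3p5 (R : realType) (r s θ : R) (f : R -> R)
  (hr : 0 < r) (hrs : r < s) (hθ0 : 0 <= θ) (hθ1 : θ < 8^-1)
  (f_nd : forall x y, r <= x -> x <= y -> y <= s -> f x <= f y)
  (f_rc : forall x, r <= x -> x < s -> f y @[y --> x^'+] --> f x)
  (E : set R) (mE : Lmeasurable E) (Esub : E `<=` `[r, s])
  (Esmall : (Lmeasure E < (θ * (s - r))%:E)%E) :
  exists rt st : R,
    [/\ [/\ r < rt, rt < st & st < s], ~ E rt, ~ E st,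
      (forall a, a = rt \/ a = st ->
        (forall τ, r <= τ -> τ < a ->
           (f a - f τ) / (a - τ) <= 800 / (1 - 8 * θ) * ((f s - f r) / (s - r))) /\
        (forall τ, a < τ -> τ <= s ->
           (f τ - f a) / (τ - a) <= 800 / (1 - 8 * θ) * ((f s - f r) / (s - r))))
    & st - rt <= s - r /\ s - r <= 8 * (st - rt)].
Proof.
have hθ : θ * 8 < 1 by rewrite -ltr_pdivlMr // div1r.
have mu0 : 0 <= f s - f r by rewrite subr_ge0; apply: f_nd; lra.
pose lam := 800 / (1 - 8 * θ) * ((f s - f r) / (s - r)).
have lam0 : 0 <= lam by apply: mulr_ge0; apply: divr_ge0; lra.
pose beta := 3 * (1 - 8 * θ) * (s - r) / 800.
have beta0 : 0 <= beta by apply: divr_ge0; [apply: mulr_ge0; [apply: mulr_ge0|]; lra|lra].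
have Hb : (((@wlength R idfun)^*)%mu (Hset f r s lam) <= beta%:E)%E.
  move: mu0; rewrite le_eqVlt => /orP[/eqP mu_e|mu_pos].
    have sub0 : Hset f r s lam `<=` set0.
      move=> x [i [p0 [ri [is_ hl]]] _].
      have h1 : f (i.1 + i.2) <= f s by apply: f_nd; lra.
      have h2 : f r <= f (i.1 - i.2) by apply: f_nd; lra.
      have h3 : 0 <= lam * (i.2 *+ 2) by rewrite mulr_ge0 // mulrn_wge0 // ltW.
      lra.
    apply: (le_trans (le_outer_measure ((@wlength R idfun)^*)%mu _ _ sub0)).
    by rewrite outer_measure0 lee_fin.
  have lam_pos : 0 < lam.
    by apply: mulr_gt0; apply: divr_gt0; lra.
  have := @H_bound R f r s f_nd lam lam_pos (ltW hrs).
  have -> : 3 * (f s - f r) / lam = beta.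
    rewrite /lam /beta; field.
    by apply/and3P; split; apply/eqP; lra.
  by [].
have mE0 : (0 <= ((@wlength R idfun)^*)%mu E)%E by exact: outer_measure_ge0.
have [e eE /andP[e0 eb]] := efin _ _ mE0 (ltW Esmall).
have elt : e < θ * (s - r) by rewrite -lte_fin -eE.
have mH0 : (0 <= ((@wlength R idfun)^*)%mu (Hset f r s lam))%E
  by exact: outer_measure_ge0.
have [h hE /andP[h0 hb]] := efin _ _ mH0 Hb.
have X8 : θ * (s - r) <= (s - r) / 8.
  rewrite ler_pdivlMr // mulrAC -[leRHS]mul1r; apply: ler_wpM2r; lra.
have bE : beta = 3 * (s - r) / 800 - 24 * (θ * (s - r)) / 800 by rewrite /beta; field.
have key : e + h < (s - r) / 4 by lra.
have p1 : r < r + (s - r) / 4 by lra.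
have p2 : e + h < r + (s - r) / 4 - r by lra.
have [rt [rt1 rt2 nErt nHrt]] :=
  @find_point R E (Hset f r s lam) e h r (r + (s - r) / 4) p1 eE hE p2.
have p3 : s - (s - r) / 4 < s by lra.
have p4 : e + h < s - (s - (s - r) / 4) by lra.
have [st [st1 st2 nEst nHst]] :=
  @find_point R E (Hset f r s lam) e h (s - (s - r) / 4) s p3 eE hE p4.
exists rt, st; split => //.
- split; lra.
- move=> a [->|->]; split.
  + apply: (@good_left R f r s lam f_nd lam0) => //; lra.
  + apply: (@good_right R f r s lam f_nd lam0) => //; lra.
  + apply: (@good_left R f r s lam f_nd lam0) => //; lra.
  + apply: (@good_right R f r s lam f_nd lam0) => //; lra.
- split; lra.
Qed.
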